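(* Let $M$ be a matroid of rank $r$ on a finite linearly ordered set $E$. Then $M=M(E,\mathcal V_0,\mathcal V_1,\dots,\mathcal V_{r-1})$.
   Context: Graded lexicographic order on $2^E$: $X\prec Y$ if $|X|<|Y|$, or $|X|=|Y|$ and $\min(X\triangle Y)\in X$; $\min\mathcal X$ is the $\prec$-smallest member. $X$ is $k$-closed in $M$ if $\mathrm{cl}_M(Y)\subseteq X$ for all $Y\subseteq X$ with $|Y|\le k$; $\mathrm{cl}_k(X)$ is the intersection of all $k$-closed supersets of $X$ (so $\mathrm{cl}_{-1}(X)=X$). For a flat $F$ of rank $k$, $U^*_F=\min\{U:\mathrm{cl}_{k-1}(U)=F\}$; $\mathcal U^*_k=\{U^*_F: F\text{ a flat of rank }k,\ |U^*_F|>k\}$. $V\subseteq U$ is consecutive in $U$ if there are no $e,g\in V$, $f\in U\setminus V$ with $e<f<g$. For $U\in\mathcal U^*_k$, $\mathcal V(U)$ is the set of consecutive $(k+1)$-subsets of $U$, and $\mathcal V_k=\bigcup_{U\in\mathcal U^*_k}\mathcal V(U)$. Erections: for a matroid $N$ of rank $\rho$ with independent sets $\mathcal I$, $T(N)=(E,\{I\in\mathcal I:|I|\le\rho-1\})$, and $N'$ is an erection of $N$ if $T(N')=N$ or $N'=N$. Knuth's procedure on input $N$ (rank $\rho$) and $\mathcal U\subseteq 2^E$: initialise $\mathcal H\leftarrow\mathcal U\cup\{F\cup\{e\}: F\text{ a hyperplane of }N,\ e\notin F\}$; while there are distinct $H,H'\in\mathcal H$ with $r_N(H\cap H')=\rho$,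 replace them by $H\cup H'$. It is known (Knuth) that the output does not depend on the choices and is the set of rank-$\rho$ flats of an erection of $N$, denoted $N\uparrow\mathcal U$ (equal to $N$ if the output is $\{E\}$). With $M_0$ the rank-$0$ matroid on $E$, $M(E,\mathcal U_0,\dots,\mathcal U_k)=(\cdots((M_0\uparrow\mathcal U_0)\uparrow\mathcal U_1)\cdots)\uparrow\mathcal U_k$. *)

(* Defs.v *)
(* Matroids on a finite linearly ordered ground set E,
   encoded as the finite type T : finOrderType (E = all of T), a matroid
   being given by its family of independent sets. *)
From HB Require Import structures.
From mathcomp Require Import all_boot all_order.
Set Implicit Arguments. Unset Strict Implicit. Unset Printing Implicit Defensive.

Section Matroids.
Variables (d : Order.disp_t) (T : finOrderType d).

Definition is_matroid (I : {set {set T}}) : Prop :=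
  [/\ set0 \in I,
      (forall A B : {set T}, B \in I -> A \subset B -> A \in I) &
      (forall A B : {set T}, A \in I -> B \in I -> #|A| < #|B| ->
          exists2 e, e \in B :\: A & e |: A \in I)].

Definition mrank (I : {set {set T}}) (X : {set T}) : nat :=
  \max_(Y in I | Y \subset X) #|Y|.

Definition rk (I : {set {set T}}) : nat := mrank I setT.

Definition mcl (I : {set {set T}}) (X : {set T}) : {set T} :=
  [set e | mrank I (e |: X) == mrank I X].

Definition flat (I : {set {set T}}) (X : {set T}) : bool := mcl I X == X.

(* hyperplane = flat of rank rk - 1 (so none when rk = 0) *)
Definition hyperplane (I : {set {set T}}) (X : {set T}) : bool :=
  flat I X && ((mrank I X).+1 == rk I).

(* closed_below I k X  <=>  X is (k-1)-closed:
   cl(Y) \subset X for all Y \subset X with |Y| <= k-1.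
   For k = 0 every set is (-1)-closed. *)
Definition closed_below (I : {set {set T}}) (k : nat) (X : {set T}) : bool :=
  [forall Y : {set T}, ((Y \subset X) && (#|Y| < k)) ==> (mcl I Y \subset X)].

(* cl_below I k X = cl_{k-1}(X): intersection of all (k-1)-closed supersets.
   In particular cl_below I 0 X = X = cl_{-1}(X). *)
Definition cl_below (I : {set {set T}}) (k : nat) (X : {set T}) : {set T} :=
  \bigcap_(Z : {set T} | (X \subset Z) && closed_below I k Z) Z.

Definition glex_lt (X Y : {set T}) : bool :=
  (#|X| < #|Y|) ||
  ((#|X| == #|Y|) &&
   [exists e, (e \in X :\: Y) &&
      [forall f, (f \in (X :\: Y) :|: (Y :\: X)) ==> (e <= f)%O]]).

(* the glex-smallest set satisfying P (set0 if there is none) *)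
Definition glex_min (P : pred {set T}) : {set T} :=
  odflt set0 [pick U | P U && [forall V, P V ==> (V == U) || glex_lt U V]].

Definition UstarF (I : {set {set T}}) (F : {set T}) : {set T} :=
  glex_min (fun U => cl_below I (mrank I F) U == F).

Definition Ustar (I : {set {set T}}) (k : nat) : {set {set T}} :=
  [set UstarF I F | F : {set T} &
     [&& flat I F, mrank I F == k & k < #|UstarF I F|]].

Definition consecutive (V U : {set T}) : bool :=
  [forall e, forall f, forall g,
     [&& e \in V, g \in V & f \in U :\: V] ==> ~~ ((e < f)%O && (f < g)%O)].

Definition Vfam (k : nat) (U : {set T}) : {set {set T}} :=
  [set V : {set T} | [&& V \subset U, #|V| == k.+1 & consecutive V U]].

Definition Vk (I : {set {set T}}) (k : nat) : {set {set T}} :=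
  \bigcup_(U in Ustar I k) Vfam k U.

Definition knuth_init (N : {set {set T}}) (U : {set {set T}}) : {set {set T}} :=
  U :|: [set e |: F | F in [set F0 : {set T} | hyperplane N F0], e in ~: F].

(* one merging step: if there are distinct H, H' in the family with
   r_N(H :&: H') = rho, replace them by H :|: H' (a canonical choice of the
   pair is made; by Knuth the result does not depend on the choices). *)
Definition knuth_step (N : {set {set T}}) (Hs : {set {set T}}) : {set {set T}} :=
  match [pick p : {set T} * {set T} |
           [&& p.1 \in Hs, p.2 \in Hs, p.1 != p.2 &
               mrank N (p.1 :&: p.2) == rk N]] with
  | Some p => (Hs :\ p.1 :\ p.2) :|: [set p.1 :|: p.2]
  | None => Hs
  end.

(* each effective step decreases the size of the family, so #|init|
   iterations reach the terminal family *)
Definition knuth_out (N : {set {set T}}) (U : {set {set T}}) : {set {set T}} :=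
  let H0 := knuth_init N U in iter #|H0| (knuth_step N) H0.

(* N ^ U : the erection of N (rank rho) whose rank-rho flats are the output
   of Knuth's procedure: its independent sets are the independent sets of N
   (all of size <= rho) together with the (rho+1)-sets contained in no
   member of the output. *)
Definition erect (N : {set {set T}}) (U : {set {set T}}) : {set {set T}} :=
  let rho := rk N in
  let Hs := knuth_out N U in
  [set X | ((X \in N) && (#|X| <= rho)) ||
           ((#|X| == rho.+1) && [forall H in Hs, ~~ (X \subset H)])].

Definition M0 : {set {set T}} := [set set0].

Definition Mgen (Us : seq {set {set T}}) : {set {set T}} := foldl erect M0 Us.

End Matroids.

(* Main.v *)
Require Import Defs.
From HB Require Import structures.
From mathcomp Require Import all_boot all_order.
From mathcomp Require Import zify.
Set Implicit Arguments. Unset Strict Implicit. Unset Printing Implicit Defensive.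
Import Order.TTheory.

Section Rank.
Variables (d : Order.disp_t) (T : finOrderType d).
Variable I : {set {set T}}.
Hypothesis HI : is_matroid I.

Local Notation r := (mrank I).

Lemma I0 : set0 \in I. Proof. by case: HI. Qed.
Lemma Isub (A B : {set T}) : B \in I -> A \subset B -> A \in I.
Proof. by case: HI => _ H _; apply: H. Qed.
Lemma Iaug (A B : {set T}) : A \in I -> B \in I -> #|A| < #|B| -> exists2 e, e \in B :\: A & e |: A \in I.
Proof. by case: HI => _ _ H; apply: H. Qed.

Lemma rank_ge (X Y : {set T}) : Y \in I -> Y \subset X -> #|Y| <= r X.
Proof.
move=> YI YX; rewrite /mrank.
exact: (@leq_bigmax_cond _ (fun Y => (Y \in I) && (Y \subset X)) (fun Y => #|Y|) Y (introT andP (conj YI YX))).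
Qed.

Lemma rank_wit (X : {set T}) : exists2 Y, (Y \in I) && (Y \subset X) & #|Y| = r X.
Proof.
have [|Y] := @eq_bigmax_cond _ [pred Y | (Y \in I) && (Y \subset X)] (fun Y => #|Y|).
  by apply/card_gt0P; exists set0; rewrite inE I0 sub0set.
rewrite inE => HY e; exists Y => //; apply/esym; exact: e.
Qed.

Lemma rank_le_card (X : {set T}) : r X <= #|X|.
Proof. by apply/bigmax_leqP => Y /andP[_ YX]; apply: subset_leq_card. Qed.

Lemma rank_mono (X X' : {set T}) : X \subset X' -> r X <= r X'.
Proof.
move=> s; have [Y /andP[YI YX] <-] := rank_wit X.
by apply: rank_ge => //; apply: subset_trans s.
Qed.

Lemma rank_ind (X : {set T}) : X \in I -> r X = #|X|.
Proof. by move=> XI; apply/eqP; rewrite eqn_leq rank_le_card rank_ge. Qed.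

Lemma rank_card_ind (X : {set T}) : r X = #|X| -> X \in I.
Proof.
move=> e; have [Y /andP[YI YX] eY] := rank_wit X.
have -> : X = Y; last by [].
by apply/esym/eqP; rewrite eqEcard YX eY e leqnn.
Qed.

Lemma extend (Z X : {set T}) j : Z \in I -> Z \subset X -> #|Z| <= j -> j <= r X ->
  exists Z', [/\ Z' \in I, Z \subset Z', Z' \subset X & #|Z'| = j].
Proof.
move=> ZI ZX h1; have [n ->] : exists n, j = #|Z| + n by exists (j - #|Z|); lia.
elim: n => [|n IH] h2.
  by exists Z; rewrite addn0.
have [|Z1 [Z1I ZZ1 Z1X c1]] := IH; first by lia.
have [B /andP[BI BX] cB] := rank_wit X.
have [|e /setDP[eB eZ1] eI] := Iaug Z1I BI; first by lia.
exists (e |: Z1); split => //.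
- by apply: subset_trans ZZ1 (subsetUr _ _).
- by rewrite subUset sub1set Z1X (subsetP BX).
- by rewrite cardsU1 eZ1 c1; lia.
Qed.

Lemma submod (A B : {set T}) : r (A :|: B) + r (A :&: B) <= r A + r B.
Proof.
have [Z /andP[ZI ZAB] cZ] := rank_wit (A :&: B).
have [|||Z' [Z'I ZZ' Z'AB cZ']] := @extend Z (A :|: B) (r (A :|: B)) ZI.
- by apply: subset_trans ZAB _; apply: subset_trans (subsetIl _ _) (subsetUl _ _).
- by rewrite cZ; apply: rank_mono; apply: subset_trans (subsetIl _ _) (subsetUl _ _).
- by [].
have h1 : #|Z' :&: A| <= r A by apply: rank_ge; [apply: Isub Z'I _; apply: subsetIl | apply: subsetIr].
have h2 : #|Z' :&: B| <= r B by apply: rank_ge; [apply: Isub Z'I _; apply: subsetIl | apply: subsetIr].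
have e1 := cardsUI (Z' :&: A) (Z' :&: B).
have e2 : (Z' :&: A) :|: (Z' :&: B) = Z' by rewrite -setIUr; apply/setIidPl.
have h3 : #|Z| <= #|(Z' :&: A) :&: (Z' :&: B)|.
  apply: subset_leq_card; rewrite subsetI !subsetI ZZ'.
  by rewrite (subset_trans ZAB (subsetIl _ _)) (subset_trans ZAB (subsetIr _ _)).
rewrite e2 in e1; lia.
Qed.

Lemma rankU1 (e : T) (X : {set T}) : r (e |: X) <= (r X).+1.
Proof.
have [Y /andP[YI YX] <-] := rank_wit (e |: X).
have h : #|Y :\ e| <= r X.
  apply: rank_ge; first by apply: Isub YI _; apply: subsetDl.
  apply/subsetP => x /setD1P[xe xY]; move/subsetP: YX => /(_ x xY).
  by rewrite in_setU1 (negbTE xe).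
rewrite (cardsD1 e Y); case: (e \in Y) => /=; [by rewrite add1n ltnS | by rewrite add0n (leq_trans h)].
Qed.

Lemma memcl (e : T) (X : {set T}) : (e \in mcl I X) = (r (e |: X) == r X).
Proof. by rewrite /mcl inE. Qed.

Lemma sub_mcl (X : {set T}) : X \subset mcl I X.
Proof.
by apply/subsetP => e eX; rewrite memcl; have -> : e |: X = X by apply/setUidPr; rewrite sub1set.
Qed.

Lemma rank_subU1 (e : T) (X : {set T}) : r X <= r (e |: X).
Proof. by apply: rank_mono; apply: subsetUr. Qed.

Lemma mcl_mono (X Y : {set T}) : X \subset Y -> mcl I X \subset mcl I Y.
Proof.
move=> XY; apply/subsetP => e; rewrite !memcl => /eqP h.
have := submod (e |: X) Y.
have -> : (e |: X) :|: Y = e |: Y.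
  by rewrite -setUA; congr (_ :|: _); apply/setUidPr.
have : r X <= r ((e |: X) :&: Y).
  by apply: rank_mono; rewrite subsetI subsetUr XY.
have := rank_subU1 e Y; rewrite h => h1 h2 h3.
by rewrite eqn_leq h1; lia.
Qed.

Lemma rank_addcl_seq (X : {set T}) (s : seq T) : all (mem (mcl I X)) s ->
  r (X :|: [set x in s]) = r X.
Proof.
elim: s => [|a s IH] /=.
  by move=> _; rewrite (_ : [set x in [::]] = set0) ?setU0 //; apply/setP => x; rewrite !inE.
move=> /andP[aX /IH e].
have -> : X :|: [set x in a :: s] = a |: (X :|: [set x in s]).
  by apply/setP => x; rewrite !inE orbCA.
rewrite -e; apply/eqP; rewrite -memcl.
apply: (subsetP (mcl_mono (subsetUl X [set x in s]))); exact: aX.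
Qed.

Lemma rank_addcl (X S : {set T}) : S \subset mcl I X -> r (X :|: S) = r X.
Proof.
move=> SX; have -> : S = [set x in enum S] by apply/setP => x; rewrite inE mem_enum.
apply: rank_addcl_seq; apply/allP => x; rewrite mem_enum; exact: (subsetP SX).
Qed.

Lemma rank_mcl (X : {set T}) : r (mcl I X) = r X.
Proof.
by rewrite -(rank_addcl (subxx (mcl I X))); congr r; apply/esym/setUidPr; apply: sub_mcl.
Qed.

Lemma mcl_idem (X : {set T}) : mcl I (mcl I X) = mcl I X.
Proof.
apply/eqP; rewrite eqEsubset sub_mcl andbT; apply/subsetP => e; rewrite !memcl rank_mcl => /eqP h.
have h1 : r (e |: X) <= r (e |: mcl I X) by apply: rank_mono; apply: setUS; apply: sub_mcl.
by rewrite eqn_leq rank_subU1 andbT; lia.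
Qed.

Lemma mcl_closed_below k (X : {set T}) : closed_below I k (mcl I X).
Proof.
apply/forallP => Y; apply/implyP => /andP[YX _].
by apply: subset_trans (mcl_mono YX) _; rewrite mcl_idem.
Qed.

Lemma basis_span (X Y : {set T}) : Y \in I -> Y \subset X -> #|Y| = r X -> X \subset mcl I Y.
Proof.
move=> YI YX cY; apply/subsetP => e eX; rewrite memcl (rank_ind YI) eqn_leq.
rewrite -{2}(rank_ind YI) rank_subU1 andbT cY; apply: rank_mono.
by rewrite subUset sub1set eX YX.
Qed.

Lemma dep_elt (S : {set T}) : S \notin I ->
  exists Y c, [/\ Y \in I, Y \subset S :\ c, c \in S, c \in mcl I Y & #|Y| < #|S|].
Proof.
move=> SI; have [Y /andP[YI YS] cY] := rank_wit S.
have lt : #|Y| < #|S|.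
  rewrite ltn_neqAle subset_leq_card // andbT; apply/negP => /eqP e.
  by move/negP: SI; apply; apply: rank_card_ind; rewrite -cY e.
have /subsetPn[c cS cY'] : ~~ (S \subset Y).
  by apply/negP => h; have := subset_leq_card h; lia.
exists Y, c; split => //.
- apply/subsetP => x xY; rewrite in_setD1 (subsetP YS) // andbT.
  by apply/negP => /eqP ex; rewrite -ex xY in cY'.
- have : c |: Y \subset S by rewrite subUset sub1set cS YS.
  move/rank_mono; rewrite -cY memcl => h.
  by rewrite (rank_ind YI) eqn_leq h -(rank_ind YI) rank_subU1.
Qed.
End Rank.

Section Clb.
Variables (d : Order.disp_t) (T : finOrderType d).
Variable I : {set {set T}}.

Lemma closed_belowP k (Z Y : {set T}) : closed_below I k Z -> Y \subset Z -> #|Y| < k ->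
  mcl I Y \subset Z.
Proof. by move=> /forallP /(_ Y) /implyP h YZ Yk; apply: h; rewrite YZ Yk. Qed.

Lemma sub_clb k (X : {set T}) : X \subset cl_below I k X.
Proof. by apply/bigcapsP => Z /andP[]. Qed.

Lemma clb_min k (X Z : {set T}) : X \subset Z -> closed_below I k Z -> cl_below I k X \subset Z.
Proof.
move=> XZ cZ; rewrite /cl_below.
by apply: (@bigcap_inf _ _ Z); rewrite XZ cZ.
Qed.

Lemma clb_closed k (X : {set T}) : closed_below I k (cl_below I k X).
Proof.
apply/forallP => Y; apply/implyP => /andP[YX Yk].
apply/bigcapsP => Z /andP[XZ cZ]; exact: (closed_belowP cZ (subset_trans YX (clb_min XZ cZ)) Yk).
Qed.

Lemma clb0 (X : {set T}) : cl_below I 0 X = X.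
Proof.
apply/eqP; rewrite eqEsubset sub_clb andbT; apply: clb_min => //.
by apply/forallP => Y; rewrite ltn0 andbF.
Qed.
End Clb.

Section Glex.
Variables (d : Order.disp_t) (T : finOrderType d).

Lemma exmin (A : {set T}) (x0 : T) : x0 \in A -> exists2 m, m \in A & forall x, x \in A -> (m <= x)%O.
Proof.
move=> x0A; have [m mA mmin] := @arg_minP _ T T x0 [pred x in A] id x0A.
by exists m.
Qed.

Lemma exmax (A : {set T}) (x0 : T) : x0 \in A -> exists2 m, m \in A & forall x, x \in A -> (x <= m)%O.
Proof.
move=> x0A; have [m mA mmin] := @arg_maxP _ T T x0 [pred x in A] id x0A.
by exists m.
Qed.

Lemma glex_irr (X : {set T}) : ~~ glex_lt X X.
Proof.
rewrite /glex_lt ltnn /=; apply/negP => /andP[_ /existsP[e]].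
by rewrite setDv inE.
Qed.

Lemma glex_total (X Y : {set T}) : X != Y -> glex_lt X Y || glex_lt Y X.
Proof.
move=> XY; rewrite /glex_lt.
case: (ltngtP #|X| #|Y|) => //= cXY.
have [x xsd] : exists x, x \in (X :\: Y) :|: (Y :\: X).
  apply/set0Pn; apply/negP => /eqP h; move/negP: XY; apply.
  by rewrite eqEsubset -!setD_eq0; apply/andP; split; apply/eqP; apply/setP => z;
    move/setP: h => /(_ z); rewrite !inE; case: (z \in X); case: (z \in Y).
have [m msd mmin] := exmin xsd.
move: (msd); rewrite inE => /orP[mXY|mYX].
  by apply/orP; left; apply/existsP; exists m; rewrite mXY /=; apply/forallP => f; apply/implyP; apply: mmin.
apply/orP; right; apply/existsP; exists m; rewrite mYX /=; apply/forallP => f; apply/implyP => fsd.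
by apply: mmin; rewrite setUC.
Qed.

Lemma sd3 (g : T) (X Y Z : {set T}) : g \in (X :\: Z) :|: (Z :\: X) ->
  (g \in (X :\: Y) :|: (Y :\: X)) || (g \in (Y :\: Z) :|: (Z :\: Y)).
Proof. by rewrite !inE; case: (g \in X); case: (g \in Y); case: (g \in Z). Qed.

Lemma glex_trans (X Y Z : {set T}) : glex_lt X Y -> glex_lt Y Z -> glex_lt X Z.
Proof.
rewrite /glex_lt.
case: (ltngtP #|X| #|Y|) => cXY /=; case: (ltngtP #|Y| #|Z|) => cYZ //=.
- by rewrite (ltn_trans cXY cYZ).
- by rewrite -cYZ cXY.
- by rewrite cXY cYZ.
move=> /existsP[e /andP[eXY /forallP He]] /existsP[f /andP[fYZ /forallP Hf]].
have -> /= : #|X| < #|Z| = false by lia.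
have -> /= : #|X| == #|Z| by apply/eqP; lia.
move: eXY fYZ; rewrite !inE => /andP[eY eX] /andP[fZ fY].
have He' g : g \in (X :\: Y) :|: (Y :\: X) -> (e <= g)%O by move=> h; apply: (implyP (He g)).
have Hf' g : g \in (Y :\: Z) :|: (Z :\: Y) -> (f <= g)%O by move=> h; apply: (implyP (Hf g)).
case: (ltgtP e f) => ef.
- apply/existsP; exists e; apply/andP; split.
    rewrite !inE eX andbT; apply/negP => eZ.
    have := Hf' e; rewrite !inE eZ eY /= => /(_ isT); rewrite leNgt ef.
    by [].
  apply/forallP => g; apply/implyP => /(sd3 Y) /orP[h|h]; first exact: He'.
  by apply: le_trans (ltW ef) (Hf' g h).
- apply/existsP; exists f; apply/andP; split.
    rewrite !inE fZ /=; apply/negP => /negP fX.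
    have := He' f; rewrite !inE fY (negbTE fX) /= => /(_ isT); rewrite leNgt ef.
    by [].
  apply/forallP => g; apply/implyP => /(sd3 Y) /orP[h|h]; last exact: Hf'.
  by apply: le_trans (ltW ef) (He' g h).
- by rewrite ef fY in eY.
Qed.

Lemma glex_min_exS n (S : {set {set T}}) U0 : #|S| <= n -> U0 \in S ->
  exists2 U, U \in S & forall V, V \in S -> (V == U) || glex_lt U V.
Proof.
elim: n S U0 => [|n IH] S U0 cS U0S.
  by move: cS; rewrite leqn0 => /eqP/cards0_eq h; rewrite h inE in U0S.
case: (boolP [forall V in S, (V == U0) || glex_lt U0 V]) => [/forall_inP H|].
  by exists U0.
move=> /forall_inPn[V VS /norP[VU0 nlt]].
have ltV : glex_lt V U0.
  by have := glex_total VU0; rewrite (negbTE nlt) orbF.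
pose S' := [set W in S | glex_lt W U0].
have VS' : V \in S' by rewrite inE VS ltV.
have cS' : #|S'| <= n.
  have : S' \proper S.
    rewrite properE; apply/andP; split; first by apply/subsetP => W; rewrite inE => /andP[].
    apply/subsetPn; exists U0 => //; rewrite inE (negbTE (glex_irr U0)) andbF //.
  by move/proper_card; lia.
have [m mS' mmin] := IH S' V cS' VS'.
move: (mS'); rewrite inE => /andP[mS mU0].
exists m => // W WS.
case: (boolP (glex_lt W U0)) => WU0.
  by apply: mmin; rewrite inE WS WU0.
case: (eqVneq W U0) => [->|WnU0]; first by rewrite mU0 orbT.
have := glex_total WnU0; rewrite (negbTE WU0) /= => h.
by rewrite (glex_trans mU0 h) orbT.
Qed.

Lemma glex_minP (P : pred {set T}) U0 : P U0 ->
  P (glex_min P) /\ forall V, P V -> #|glex_min P| <= #|V|.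
Proof.
move=> PU0.
have U0S : U0 \in [set U | P U] by rewrite inE.
have [U US Umin] := @glex_min_exS #|[set U | P U]| [set U | P U] U0 (leqnn _) U0S.
rewrite /glex_min; case: pickP => [W /andP[PW /forallP HW] | H].
  split => // V PV; have /implyP/(_ PV)/orP[/eqP ->//|] := HW V.
  by rewrite /glex_lt => /orP[/ltnW|/andP[/eqP -> _]].
exfalso; move: (H U); rewrite inE in US; rewrite US /=; move/negP; apply.
apply/forallP => V; apply/implyP => PV; apply: Umin; by rewrite inE.
Qed.

Lemma glex_min_cases (P : pred {set T}) : glex_min P = set0 \/ P (glex_min P).
Proof.
rewrite /glex_min; case: pickP => [W /andP[PW _]|_]; by [right | left].
Qed.
End Glex.

Section Knuth.
Variables (d : Order.disp_t) (T : finOrderType d).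
Variables (N : {set {set T}}) (U : {set {set T}}).

Definition terminal (Hs : {set {set T}}) :=
  forall a b : {set T}, a \in Hs -> b \in Hs -> a != b -> mrank N (a :&: b) != rk N.

Lemma knuth_stepP (Hs : {set {set T}}) :
  (knuth_step N Hs = Hs /\ terminal Hs) \/
  (exists a b, [/\ a \in Hs, b \in Hs, a != b, mrank N (a :&: b) == rk N &
     knuth_step N Hs = (Hs :\ a :\ b) :|: [set a :|: b]]).
Proof.
rewrite /knuth_step; case: pickP => [[a b] /= /and4P[aH bH ab e]|H].
  by right; exists a, b.
left; split => // a b aH bH ab; move: (H (a, b)) => /=.
by rewrite aH bH ab /= => ->.
Qed.

Lemma step_card (Hs : {set {set T}}) (a b : {set T}) : a \in Hs -> b \in Hs -> a != b ->
  #|(Hs :\ a :\ b) :|: [set a :|: b]| < #|Hs|.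
Proof.
move=> aH bH ab.
have e1 := cardsD1 a Hs; rewrite aH in e1.
have e2 := cardsD1 b (Hs :\ a); rewrite in_setD1 eq_sym ab bH /= in e2.
have := leq_card_setU (Hs :\ a :\ b) [set a :|: b]; rewrite cards1.
move: e1 e2; set x := #|Hs :\ a|; set y := #|Hs :\ a :\ b|; set z := #|_ :|: _|.
move=> e1 e2 h; rewrite e1 e2 /=; have h' := leq_of_leqif h; lia.
Qed.

Lemma terminal_fix (Hs : {set {set T}}) : terminal Hs -> knuth_step N Hs = Hs.
Proof.
move=> tH; case: (knuth_stepP Hs) => [[]//|[a [b [aH bH ab e _]]]].
by have := tH a b aH bH ab; rewrite e.
Qed.

Lemma knuth_out_terminal : terminal (knuth_out N U).
Proof.
rewrite /knuth_out; set H0 := knuth_init N U.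
have key i : terminal (iter i (knuth_step N) H0) \/ #|iter i (knuth_step N) H0| + i <= #|H0|.
  elim: i => [|i [IH|IH]]; first by right; rewrite addn0.
  - by left; rewrite iterS terminal_fix.
  - rewrite iterS; case: (knuth_stepP (iter i (knuth_step N) H0)) => [[-> t]|[a [b [aH bH ab _ ->]]]].
      by left.
    by right; rewrite addnS; apply: leq_trans _ IH; rewrite ltn_add2r; exact: step_card aH bH ab.
case: (key #|H0|) => // h a b aH.
have : #|iter #|H0| (knuth_step N) H0| = 0 by lia.
by move/cards0_eq => e; rewrite e inE in aH.
Qed.

Lemma knuth_inv (Q : pred {set T}) :
  (forall A, A \in knuth_init N U -> Q A) ->
  (forall a b, Q a -> Q b -> mrank N (a :&: b) = rk N -> Q (a :|: b)) ->
  forall H, H \in knuth_out N U -> Q H.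
Proof.
move=> Q0 QU; rewrite /knuth_out; set H0 := knuth_init N U.
elim: #|H0| => [|i IH] H //=; first exact: Q0.
case: (knuth_stepP (iter i (knuth_step N) H0)) => [[-> _]|[a [b [aH bH ab /eqP e ->]]]].
  exact: IH.
rewrite !inE => /orP[/andP[_ /andP[_ HH]]|/eqP ->]; first exact: IH.
by apply: QU => //; apply: IH.
Qed.

Lemma knuth_cover (A : {set T}) : A \in knuth_init N U -> exists2 H, H \in knuth_out N U & A \subset H.
Proof.
move=> AH0; rewrite /knuth_out; set H0 := knuth_init N U.
elim: #|H0| => [|i [H HH AH]] /=; first by exists A.
case: (knuth_stepP (iter i (knuth_step N) H0)) => [[-> _]|[a [b [aH bH ab _ ->]]]].
  by exists H.
case: (boolP ((H == a) || (H == b))) => [/orP[/eqP eH|/eqP eH]|].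
- exists (a :|: b); first by rewrite !inE eqxx orbT.
  by apply: subset_trans AH _; rewrite eH subsetUl.
- exists (a :|: b); first by rewrite !inE eqxx orbT.
  by apply: subset_trans AH _; rewrite eH subsetUr.
- move=> /norP[Ha Hb]; exists H => //; by rewrite !inE Ha Hb HH.
Qed.
End Knuth.

Section Consec.
Variables (d : Order.disp_t) (T : finOrderType d).

Lemma consec_self (U : {set T}) : consecutive U U.
Proof.
apply/forallP => e; apply/forallP => f; apply/forallP => g; apply/implyP => /and3P[_ _].
by rewrite setDv inE.
Qed.

Lemma consec_rem (W U : {set T}) m : consecutive W U ->
  ((forall x, x \in W -> (x <= m)%O) \/ (forall x, x \in W -> (m <= x)%O)) ->
  consecutive (W :\ m) U.
Proof.
move=> cW hm; apply/forallP => e; apply/forallP => f; apply/forallP => g.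
apply/implyP => /and3P[eW gW fU]; apply/negP => /andP[ef fg].
move: eW gW fU; rewrite !inE => /andP[em eW] /andP[gm gW] /andP[/negP fWm fU].
have fm : f != m.
  case: hm => hm.
    by have := hm g gW => gle; apply/negP => /eqP fe; move: fg; rewrite fe ltNge gle.
  by have := hm e eW => gle; apply/negP => /eqP fe; move: ef; rewrite fe ltNge gle.
have fW : f \notin W by apply/negP => fW; apply: fWm; rewrite fm fW.
move: cW => /forallP/(_ e)/forallP/(_ f)/forallP/(_ g)/implyP.
by rewrite eW gW !inE fW fU ef fg => /(_ isT).
Qed.
End Consec.

Lemma sub_of_card (T : finType) (A : {set T}) j : j <= #|A| -> exists2 S : {set T}, S \subset A & #|S| = j.
Proof.
elim: j => [|j IH] h; first by exists set0; rewrite ?sub0set ?cards0.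
have [|S SA cS] := IH; first by lia.
have /subsetPn[x xA xS] : ~~ (A \subset S).
  by apply/negP => /subset_leq_card; lia.
exists (x |: S); first by rewrite subUset sub1set xA SA.
by rewrite cardsU1 xS cS.
Qed.

Section Main.
Variables (d : Order.disp_t) (T : finOrderType d).
Variable M : {set {set T}}.
Hypothesis HM : is_matroid M.

Local Notation r := (mrank M).

Definition Mt k : {set {set T}} := [set X in M | #|X| <= k].

Lemma rank_trunc k (X : {set T}) : mrank (Mt k) X = minn (r X) k.
Proof.
apply/eqP; rewrite eqn_leq; apply/andP; split.
  apply/bigmax_leqP => Y /andP[]; rewrite inE => /andP[YM Yk] YX.
  by rewrite leq_min Yk rank_ge.
have [||Z [ZM _ ZX cZ]] := @extend _ _ M HM set0 X (minn (r X) k) (I0 HM) (sub0set _).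
- by rewrite cards0.
- by apply: geq_minl.
rewrite -cZ; apply: (@leq_bigmax_cond _ (fun Y => (Y \in Mt k) && (Y \subset X)) (fun Y => #|Y|) Z).
by rewrite inE ZM ZX cZ geq_minr.
Qed.

Lemma rk_trunc k : k <= rk M -> rk (Mt k) = k.
Proof. by move=> h; rewrite /rk rank_trunc; apply/minn_idPr. Qed.

Section Step.
Variable k : nat.
Hypothesis hk : k < rk M.

Local Notation N := (Mt k).
Local Notation H0 := (knuth_init N (Vk M k)).
Local Notation Hf := (knuth_out N (Vk M k)).

Lemma rkN : rk N = k.
Proof. by apply: rk_trunc; apply: ltnW. Qed.

Lemma init_rank A : A \in H0 -> r A <= k.
Proof.
rewrite /knuth_init inE => /orP[|/imset2P[F e]].
  move=> /bigcupP[U /imsetP[F]]; rewrite inE => /and3P[flF /eqP rF _] -> AV.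
  move: AV; rewrite inE => /and3P[AU _ _].
  have UF : UstarF M F \subset F.
    rewrite /UstarF; case: (glex_min_cases (fun U => cl_below M (mrank M F) U == F)) => [->|/eqP h].
      exact: sub0set.
    by apply: (subset_trans (@sub_clb _ _ M (mrank M F) _)); rewrite h.
  by rewrite -rF; apply: (rank_mono HM); apply: subset_trans AU UF.
rewrite inE => /andP[_ /eqP hF] _ ->.
rewrite rkN rank_trunc in hF.
apply: leq_trans (rankU1 HM _ _) _; lia.
Qed.

Lemma out_rank H : H \in Hf -> r H <= k.
Proof.
move=> HH; apply: (@knuth_inv _ _ N (Vk M k) (fun H => r H <= k)) HH; first exact: init_rank.
move=> a b ra rb; rewrite rkN rank_trunc => hab.
have : k <= r (a :&: b) by lia.
have := submod HM a b; lia.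
Qed.

Lemma merge_eq a b : a \in Hf -> b \in Hf -> k <= r (a :&: b) -> a = b.
Proof.
move=> aH bH h; apply/eqP; apply/negPn/negP => ab.
have := knuth_out_terminal aH bH ab; rewrite rkN rank_trunc.
by move/minn_idPr: h => ->; rewrite eqxx.
Qed.

Lemma hyp_init (B : {set T}) h : B \in M -> h |: B \in M -> h \notin B -> #|B|.+1 = k ->
  h |: mcl M B \in H0.
Proof.
move=> BM hBM hB cB.
have rG : r (mcl M B) = #|B| by rewrite (rank_mcl HM) (rank_ind BM).
have hG : h \notin mcl M B.
  by rewrite memcl (rank_ind BM) (rank_ind hBM) cardsU1 hB; rewrite eqn_leq ltnn.
rewrite /knuth_init inE; apply/orP; right; apply/imset2P.
apply: (Imset2spec (x1 := mcl M B) (x2 := h)) => //; last by rewrite inE.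
rewrite inE /hyperplane rkN rank_trunc rG (minn_idPl (ltnW _)); last by rewrite -cB.
rewrite cB eqxx andbT /flat; apply/eqP/setP => e.
have hBk : #|B| <= k by rewrite -cB.
have hle : r (e |: mcl M B) <= k by have := rankU1 HM e (mcl M B); rewrite rG cB.
rewrite -[in RHS](mcl_idem HM B) [LHS]memcl [RHS]memcl !rank_trunc rG.
by rewrite (minn_idPl hBk) (minn_idPl hle).
Qed.

Lemma mkhyp (Y S : {set T}) : Y \in M -> Y \subset S -> #|Y| < k -> k <= r S ->
  exists (B : {set T}) (h : T), [/\ Y \subset B, B \subset S, h \in S, B \in M & [/\ h |: B \in M, h \notin B & #|B|.+1 = k]].
Proof.
move=> YM YS cY kS.
have [||B [BM YB BS cB]] := extend HM (j := k.-1) YM YS; [lia|lia|].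
have [||B2 [B2M BB2 B2S cB2]] := extend HM (j := k) BM BS; [lia|lia|].
have /subsetPn[h hB2 hB] : ~~ (B2 \subset B).
  by apply/negP => /subset_leq_card; rewrite cB cB2; lia.
exists B, h; split => //.
- exact: (subsetP B2S).
- split => //; last by rewrite cB; lia.
  by apply: (Isub HM B2M); rewrite subUset sub1set hB2 BB2.
Qed.

Lemma out_closed H : H \in Hf -> k <= r H -> closed_below M k H.
Proof.
move=> Hf_ kH; apply/forallP => Y; apply/implyP => /andP[YH Yk].
have [Y' /andP[Y'M Y'Y] cY'] := rank_wit HM Y.
have cY'k : #|Y'| < k by rewrite cY'; apply: leq_ltn_trans (rank_le_card _ _) Yk.
have [B [h [Y'B BH hH BM [hBM hB cB]]]] := mkhyp Y'M (subset_trans Y'Y YH) cY'k kH.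
have [H2 H2f sub] := knuth_cover (hyp_init BM hBM hB cB).
have eH : H = H2.
  apply: merge_eq => //; have e : #|h |: B| = k by rewrite cardsU1 hB. rewrite -e.
  apply: rank_ge => //; rewrite subsetI subUset sub1set hH BH /=.
  by apply: subset_trans sub; apply: setUS; apply: sub_mcl.
apply: subset_trans (mcl_mono HM (basis_span HM Y'M Y'Y cY')) _.
rewrite eH; apply: subset_trans sub.
apply: subset_trans (subsetUr [set h] _).
by apply: subset_trans (mcl_mono HM (mcl_mono HM Y'B)) _; rewrite (mcl_idem HM).
Qed.

Lemma low_cover X : r X < k -> exists2 H, H \in Hf & X \subset H.
Proof.
move=> rX.
have [Y' /andP[Y'M Y'X] cY'] := rank_wit HM X.
have cY'k : #|Y'| < k by rewrite cY'.
have [B [h [Y'B _ _ BM [hBM hB cB]]]] := @mkhyp Y' setT Y'M (subsetT _) cY'k (ltnW hk).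
have [H Hf_ sub] := knuth_cover (hyp_init BM hBM hB cB).
exists H => //; apply: subset_trans sub; apply: subset_trans (subsetUr [set h] _).
apply: subset_trans (basis_span HM Y'M Y'X cY') _.
exact: (mcl_mono HM Y'B).
Qed.

Lemma windows (U : {set T}) : U \in Ustar M k ->
  (forall S : {set T}, S \subset U -> #|S| <= k -> S \in M) ->
  forall n (W : {set T}), #|W| = n + k.+1 -> W \subset U -> consecutive W U ->
  exists2 H, H \in Hf & W \subset H.
Proof.
move=> UU Uind; elim => [|n IH] W cW WU cons.
  apply: knuth_cover; rewrite /knuth_init inE; apply/orP; left.
  by apply/bigcupP; exists U => //; rewrite inE WU cons cW eqxx.
have [x0 x0W] : exists x0, x0 \in W by apply/card_gt0P; rewrite cW; lia.
have [mx mxW mxmax] := exmax x0W.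
have [mn mnW mnmin] := exmin x0W.
have mxmn : mx != mn.
  apply/negP => /eqP e.
  have : W \subset [set mx].
    by apply/subsetP => x xW; rewrite inE eq_le mxmax //= e mnmin.
  by move/subset_leq_card; rewrite cards1 cW; lia.
have c1 : #|W :\ mx| = n + k.+1 by have := cardsD1 mx W; rewrite mxW cW /=; lia.
have c2 : #|W :\ mn| = n + k.+1 by have := cardsD1 mn W; rewrite mnW cW /=; lia.
have [H1 H1f W1H] := IH _ c1 (subset_trans (subsetDl _ _) WU) (consec_rem cons (or_introl mxmax)).
have [H2 H2f W2H] := IH _ c2 (subset_trans (subsetDl _ _) WU) (consec_rem cons (or_intror mnmin)).
have c3 : k <= #|W :\ mx :\ mn|.
  have := cardsD1 mn (W :\ mx); rewrite !inE eq_sym mxmn mnW c1 /=; lia.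
have [S SW cS] := sub_of_card c3.
have eH : H1 = H2.
  apply: merge_eq => //; rewrite -cS; apply: rank_ge.
    apply: Uind; last by rewrite cS.
    by apply: subset_trans SW _; apply: subset_trans (subsetDl _ _) _; apply: subset_trans (subsetDl _ _) WU.
  rewrite subsetI; apply/andP; split.
    by apply: subset_trans SW _; apply: subset_trans (subsetDl _ _) W1H.
  apply: subset_trans SW _; apply: subset_trans W2H; apply/subsetP => x.
  by rewrite !inE => /andP[-> /andP[_ ->]].
exists H1 => //; apply/subsetP => x xW.
case: (eqVneq x mx) => [exm|xmx].
  by rewrite eH; apply: (subsetP W2H); rewrite in_setD1 xW andbT exm.
apply: (subsetP W1H); by rewrite in_setD1 xmx xW.
Qed.

Lemma flat_cover (F : {set T}) : flat M F -> r F = k -> k < #|F| ->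
  exists2 H, H \in Hf & F \subset H.
Proof.
move=> flF rF cF.
have Fcl : mcl M F = F by apply/eqP.
pose P := fun V : {set T} => cl_below M k V == F.
have eU : UstarF M F = glex_min P by rewrite /UstarF rF.
have cFk : closed_below M k F by rewrite -[F in closed_below _ _ F]Fcl; apply: mcl_closed_below.
have PF : P F.
  by rewrite /P eqEsubset sub_clb andbT; apply: clb_min.
have [PU Umin] := glex_minP PF.
move: PU Umin eU; set U := glex_min P => PU Umin eU.
have clU : cl_below M k U = F := eqP PU.
have Uind : forall S : {set T}, S \subset U -> #|S| <= k -> S \in M.
  move=> S SU cS; apply/negPn/negP => SnM.
  have [Y [c [YM YSc cS' cY cYS]]] := dep_elt HM SnM.
  have cU : c \in U := subsetP SU c cS'.
  have YU' : Y \subset U :\ c.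
    apply: subset_trans YSc _; apply/subsetP => x; rewrite !inE => /andP[-> /(subsetP SU) ->] //.
  have Yk : #|Y| < k by apply: leq_trans cYS cS.
  have sub1 : U \subset cl_below M k (U :\ c).
    apply/subsetP => x xU; case: (eqVneq x c) => [->|xc].
      exact: (subsetP (closed_belowP (clb_closed M k (U :\ c)) (subset_trans YU' (sub_clb M k _)) Yk)).
    by apply: (subsetP (sub_clb M k _)); rewrite in_setD1 xc xU.
  have e : cl_below M k (U :\ c) = F.
    rewrite -clU; apply/eqP; rewrite eqEsubset; apply/andP; split.
      exact: clb_min (subset_trans (subsetDl _ _) (sub_clb M k U)) (clb_closed M k U).
    exact: clb_min sub1 (clb_closed M k _).
  have := Umin (U :\ c) (introT eqP e).
  by rewrite (cardsD1 c U) cU add1n ltnn.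
have rU : k <= r U.
  have : F \subset mcl M U by rewrite -clU; apply: clb_min (sub_mcl _ _) (mcl_closed_below HM _ _).
  by move/(rank_mono HM); rewrite rF (rank_mcl HM).
have [H Hf_ UH] : exists2 H, H \in Hf & U \subset H.
  case: (ltngtP #|U| k) => cU.
  - by have := rank_le_card M U; lia.
  - have UU : U \in Ustar M k.
      by rewrite -eU; apply/imsetP; exists F => //; rewrite inE flF rF eqxx /= eU.
    have cU' : #|U| = (#|U| - k.+1) + k.+1 by lia.
    exact: (windows UU Uind cU' (subxx U) (consec_self U)).
  - case: (posnP k) => k0.
      move: cU; rewrite k0 => /cards0_eq U0.
      by move: clU cF; rewrite U0 k0 clb0 => <-; rewrite cards0.
    have [u uU] : exists u, u \in U by apply/card_gt0P; rewrite cU.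
    have UM : U \in M by apply: Uind => //; rewrite cU.
    have BM : U :\ u \in M by apply: (Isub HM UM); apply: subsetDl.
    have hBM : u |: (U :\ u) \in M by rewrite setD1K.
    have hB : u \notin U :\ u by rewrite !inE eqxx.
    have cB : #|U :\ u|.+1 = k by have := cardsD1 u U; rewrite uU cU add1n => ->.
    have [H Hf_ sub] := knuth_cover (hyp_init BM hBM hB cB).
    exists H => //; apply: subset_trans sub.
    by rewrite -{1}(setD1K uU); apply: setUS; apply: sub_mcl.
have HC := out_closed Hf_ (leq_trans rU (rank_mono HM UH)).
by exists H => //; rewrite -clU; exact: (clb_min UH HC).
Qed.

Lemma erect_step : erect (Mt k) (Vk M k) = Mt k.+1.
Proof.
apply/setP => X; rewrite /erect !inE rkN.
case: (ltngtP #|X| k.+1) => cX.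
- have c1 : (#|X| <= k) = true by rewrite -ltnS.
  by rewrite c1 !andbT orbF.
- have c1 : (#|X| <= k) = false by apply/negbTE; rewrite -ltnNge; apply: ltn_trans cX.
  by rewrite c1 !andbF.
have c1 : (#|X| <= k) = false by rewrite cX ltnn.
rewrite c1 !andbF /= !andbT.
apply/idP/idP.
  move=> /forall_inP allH; apply/negPn/negP => XnM.
  have rX : r X <= k.
    have := rank_le_card M X; rewrite cX leq_eqVlt => /orP[/eqP e|]; last by [].
    by move/negP: XnM; case; apply: (rank_card_ind HM); rewrite e cX.
  have [H Hf_ XH] : exists2 H, H \in Hf & X \subset H.
    case: (ltnP (r X) k) => rXk; first exact: low_cover.
    have rXe : r X = k by apply/eqP; rewrite eqn_leq rX rXk.
    have [|||H Hf_ FH] := @flat_cover (mcl M X).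
    - by rewrite /flat (mcl_idem HM).
    - by rewrite (rank_mcl HM).
    - by rewrite -ltnS -cX; apply: subset_leq_card; apply: sub_mcl.
    by exists H => //; apply: subset_trans FH; apply: sub_mcl.
  by have := allH H Hf_; rewrite XH.
move=> XM; apply/forall_inP => H Hf_; apply/negP => XH.
have := rank_mono HM XH; rewrite (rank_ind XM) cX => h.
by have := out_rank Hf_; lia.
Qed.

End Step.
Lemma Mgen_trunc j : j <= rk M -> foldl (@erect _ T) (@M0 _ T) [seq Vk M k | k <- iota 0 j] = Mt j.
Proof.
elim: j => [|j IH] hj.
  apply/setP => X; rewrite /M0 !inE leqn0 cards_eq0.
  by case: eqP => [->|]; rewrite ?andbF // (I0 HM).
rewrite -addn1 iotaD map_cat foldl_cat IH; last by lia.
by rewrite /= add0n (erect_step hj) addn1.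
Qed.

Lemma Mt_rk : Mt (rk M) = M.
Proof.
apply/setP => X; rewrite inE; case XM: (X \in M) => //=.
by rewrite -(rank_ind XM); apply: (rank_mono HM); apply: subsetT.
Qed.
End Main.

Theorem lemma5p7 (d : Order.disp_t) (T : finOrderType d)
  (M : {set {set T}}) (HM : is_matroid M) :
  M = Mgen [seq Vk M k | k <- iota 0 (rk M)].
Proof. by rewrite /Mgen (Mgen_trunc HM) // (Mt_rk HM). Qed.
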